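(* Let $\Gamma$ be a connected finite simple graph on $N\ge3$ vertices whose minimum vertex degree $d$ satisfies $d\ge3$. Then $\varepsilon\le\frac{\sqrt{d-1}}{d}<\frac12$.
   Context: For a finite simple graph $\Gamma=(V,E)$ without isolated vertices, $\deg v$ is the number of neighbours of $v$ and $\mathcal N(v)=\{w\in V: w\sim v\}$. The normalized Laplacian acts on functions $f:V\to\mathbb R$ by $\Delta f(v)=f(v)-\frac{1}{\deg v}\sum_{w\sim v}f(w)$; its eigenvalues are $0=\lambda_1\le\lambda_2\le\dots\le\lambda_N$, and $\varepsilon:=\min_i|1-\lambda_i|$. $d$ denotes the minimum vertex degree. *)

(* Defs.v *)
From HB Require Import structures.
From mathcomp Require Import all_boot all_order all_algebra.
From mathcomp Require Import polyrcf.
Set Implicit Arguments. Unset Strict Implicit. Unset Printing Implicit Defensive.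
Import Order.TTheory GRing.Theory Num.Theory.
Local Open Scope ring_scope.

Definition simple_graph (N : nat) (adj : rel 'I_N) : Prop :=
  irreflexive adj /\ symmetric adj.

Definition gconnected (N : nat) (adj : rel 'I_N) : Prop :=
  forall u v : 'I_N, connect adj u v.

Definition deg (N : nat) (adj : rel 'I_N) (v : 'I_N) : nat :=
  #|[set w | adj v w]|.

(* minimum vertex degree (seed N exceeds every degree, so this is the true
   minimum whenever N > 0) *)
Definition mindeg (N : nat) (adj : rel 'I_N) : nat :=
  (\big[minn/N]_(v : 'I_N) deg adj v)%N.

Definition normLap (R : fieldType) (N : nat) (adj : rel 'I_N) : 'M[R]_N :=
  \matrix_(i, j) ((i == j)%:R - (adj i j)%:R / (deg adj i)%:R).

(* the (real) eigenvalues of the normalized Laplacian, i.e. the real roots of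
   its characteristic polynomial (all eigenvalues are real) *)
Definition lapEigenvalues (R : rcfType) (N : nat) (adj : rel 'I_N) : seq R :=
  rootsR (char_poly (normLap R adj)).

Definition lapEps (R : rcfType) (N : nat) (adj : rel 'I_N) : R :=
  let s := lapEigenvalues R adj in
  \big[Num.min/`|1 - head 0 s|]_(l <- s) `|1 - l|.

(* Main.v *)
Require Import Defs.
From HB Require Import structures.
From mathcomp Require Import all_boot all_order all_algebra.
From mathcomp Require Import polyrcf.
From mathcomp Require Import complex spectral sesquilinear.
From mathcomp Require Import ring lra.
Import Order.TTheory GRing.Theory Num.Theory.
Local Open Scope ring_scope.
Set Implicit Arguments. Unset Strict Implicit.

Lemma bigminn_le (I : eqType) (r : seq I) (F : I -> nat) n0 i :
  i \in r -> (\big[minn/n0]_(v <- r) F v <= F i)%N.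
Proof.
elim: r => //= h t IH; rewrite in_cons big_cons => /orP[/eqP->|/IH].
  exact: geq_minl.
by apply: leq_trans; exact: geq_minr.
Qed.

Lemma mindeg_le N (adj : rel 'I_N) i : (mindeg adj <= deg adj i)%N.
Proof. by rewrite /mindeg; apply: bigminn_le; rewrite mem_index_enum. Qed.

Lemma deg_sum (R : pzRingType) N (adj : rel 'I_N) i :
  (deg adj i)%:R = \sum_j (adj i j)%:R :> R.
Proof.
rewrite /deg -sum1_card natr_sum big_mkcond /=; apply: eq_bigr => j _.
by rewrite inE; case: (adj i j).
Qed.

Section Comb.
Variables (R : rcfType) (N : nat) (adj : rel 'I_N).
Hypothesis adj_sym : symmetric adj.
Variable dm : nat.
Hypothesis dm3 : (3 <= dm)%N.
Hypothesis dm_le : forall i, (dm <= deg adj i)%N.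

Definition dg i : R := (deg adj i)%:R.
Definition sq i := Num.sqrt (dg i).
Definition Smx : 'M[R]_N := \matrix_(i,j) ((adj i j)%:R / (sq i * sq j)).
Definition xx : R := dm%:R^-1.
Definition aa i := \sum_j Smx i j ^+ 2.

Lemma dm_gt0 : 0 < dm%:R :> R.
Proof. by rewrite ltr0n; apply: leq_trans dm3. Qed.

Lemma dg_ge i : dm%:R <= dg i.
Proof. by rewrite /dg ler_nat. Qed.

Lemma dg_gt0 i : 0 < dg i.
Proof. exact: lt_le_trans dm_gt0 (dg_ge i). Qed.

Lemma sq_gt0 i : 0 < sq i.
Proof. by rewrite sqrtr_gt0 dg_gt0. Qed.

Lemma sq2 i : sq i ^+ 2 = dg i.
Proof. by rewrite sqr_sqrtr // ltW // dg_gt0. Qed.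

Lemma S_sym i j : Smx i j = Smx j i.
Proof. by rewrite !mxE adj_sym [sq i * _]mulrC. Qed.

Lemma S_ge0 i j : 0 <= Smx i j.
Proof. by rewrite mxE divr_ge0 // mulr_ge0 // ltW // sq_gt0. Qed.

Lemma S_sq i j : Smx i j ^+ 2 = (adj i j)%:R / (dg i * dg j).
Proof.
rewrite mxE expr_div_n exprMn !sq2; congr (_ / _).
by case: (adj i j); rewrite ?expr1n ?expr0n.
Qed.

Lemma xx_gt0 : 0 < xx.
Proof. by rewrite invr_gt0 dm_gt0. Qed.

Lemma dgV_le i : (dg i)^-1 <= xx.
Proof. by rewrite lef_pV2 ?posrE ?dg_gt0 ?dm_gt0 // dg_ge. Qed.

Lemma S_sq_le i j : Smx i j ^+ 2 <= xx ^+ 2.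
Proof.
rewrite S_sq invfM mulrA expr2.
have h1 : (adj i j)%:R <= 1 :> R by case: (adj i j).
have h2 := dgV_le i; have h3 := dgV_le j.
have g1 : 0 <= (dg i)^-1 by rewrite invr_ge0 ltW ?dg_gt0.
have g2 : 0 <= (dg j)^-1 by rewrite invr_ge0 ltW ?dg_gt0.
have g0 : 0 <= (adj i j)%:R :> R by [].
apply: ler_pM => //; first by rewrite mulr_ge0.
by rewrite -[xx]mul1r; apply: ler_pM.
Qed.

Lemma aa_ge0 i : 0 <= aa i.
Proof. by apply: sumr_ge0 => j _; rewrite sqr_ge0. Qed.

Lemma aa_le i : aa i <= xx.
Proof.
have -> : xx = \sum_j (adj i j)%:R * ((dg i)^-1 * xx).
  rewrite -mulr_suml -deg_sum -/(dg i) mulrA mulfV ?mul1r //.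
  by rewrite gt_eqF // dg_gt0.
apply: ler_sum => j _; rewrite S_sq invfM mulrA -mulrA.
apply: ler_wpM2l => //; apply: ler_wpM2l; first by rewrite invr_ge0 ltW ?dg_gt0.
exact: dgV_le.
Qed.

Lemma sq_sum_ge (I : finType) (F : I -> R) : (forall i, 0 <= F i) ->
  \sum_i F i ^+ 2 <= (\sum_i F i) ^+ 2.
Proof.
move=> F0; rewrite [X in _ <= X]expr2 mulr_suml; apply: ler_sum => i _.
rewrite expr2; apply: ler_wpM2l => //.
by rewrite (bigD1 i) //= lerDl sumr_ge0.
Qed.

Lemma tr_S2 : \tr (Smx *m Smx) = \sum_i aa i.
Proof.
apply: eq_bigr => i _; rewrite mxE; apply: eq_bigr => j _.
by rewrite [Smx j i]S_sym expr2.
Qed.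

Definition S2 := Smx *m Smx.

Lemma S2_sym i k : S2 i k = S2 k i.
Proof.
rewrite !mxE; apply: eq_bigr => j _; by rewrite mulrC [Smx i j]S_sym [Smx j k]S_sym.
Qed.

Lemma S2_ge0 i k : 0 <= S2 i k.
Proof. by rewrite mxE sumr_ge0 // => j _; rewrite mulr_ge0 ?S_ge0. Qed.

Definition cc i := \sum_j Smx i j ^+ 4.

Lemma row_bound i : \sum_k S2 i k ^+ 2 >=
  \sum_k \sum_j (Smx i j * Smx j k) ^+ 2 + aa i ^+ 2 - cc i.
Proof.
rewrite (bigD1 i) //= [X in _ <= X](bigD1 i) //=.
have -> : S2 i i = aa i.
  by rewrite mxE; apply: eq_bigr => j _; rewrite [Smx j i]S_sym expr2.
have -> : \sum_j (Smx i j * Smx j i) ^+ 2 = cc i.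
  by apply: eq_bigr => j _; rewrite [Smx j i]S_sym -expr2 -exprM.
set A := \sum_(k | k != i) _; set B := \sum_(k | k != i) _.
suff : A <= B by lra.
apply: ler_sum => k _; rewrite mxE; apply: sq_sum_ge => j.
by rewrite mulr_ge0 ?S_ge0.
Qed.

Lemma cc_le i : cc i <= xx ^+ 2 * aa i.
Proof.
rewrite /aa mulr_sumr; apply: ler_sum => j _.
rewrite (_ : 4 = 2 * 2)%N // exprM expr2.
by apply: ler_wpM2r; [rewrite sqr_ge0 | exact: S_sq_le].
Qed.

Lemma tr_S4 : \tr (S2 *m S2) >= \sum_i (2%:R * aa i ^+ 2 - xx ^+ 2 * aa i).
Proof.
have -> : \tr (S2 *m S2) = \sum_i \sum_k S2 i k ^+ 2.
  apply: eq_bigr => i _; rewrite mxE; apply: eq_bigr => k _.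
  by rewrite [S2 k i]S2_sym expr2.
apply: le_trans (ler_sum _ (fun i _ => row_bound i)).
have E : forall i, \sum_k \sum_j (Smx i j * Smx j k) ^+ 2 =
    \sum_j Smx i j ^+ 2 * aa j.
  move=> i; rewrite exchange_big; apply: eq_bigr => j _.
  by rewrite /aa mulr_sumr; apply: eq_bigr => k _; rewrite exprMn.
under [X in _ <= X]eq_bigr do rewrite E.
rewrite !big_split /=.
rewrite exchange_big /=.
have E2 : \sum_j \sum_i Smx i j ^+ 2 * aa j = \sum_j aa j ^+ 2.
  apply: eq_bigr => j _; rewrite -mulr_suml expr2; congr (_ * _).
  by apply: eq_bigr => i _; rewrite S_sym.
rewrite E2.
have : \sum_i - cc i >= \sum_i - (xx ^+ 2 * aa i).
  by apply: ler_sum => i _; rewrite lerN2 cc_le.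
have -> : \sum_i 2%:R * aa i ^+ 2 = \sum_i aa i ^+ 2 + \sum_i aa i ^+ 2.
  by rewrite -big_split /=; apply: eq_bigr => i _; rewrite mulr2n mulrDl mul1r.
lra.
Qed.

Lemma xx3 : 3%:R * xx <= 1.
Proof.
rewrite /xx ler_pdivrMr ?dm_gt0 // mul1r ler_nat //.
Qed.

Lemma trace_ineq : - \tr (S2 *m S2) + (1 + (xx - xx ^+ 2)) * \tr S2
   - N%:R * (xx - xx ^+ 2) <= 0.
Proof.
have h4 := tr_S4.
rewrite /S2 tr_S2.
have : \sum_i (- (2%:R * aa i ^+ 2 - xx ^+ 2 * aa i) + (1 + (xx - xx ^+ 2)) * aa i
  - (xx - xx ^+ 2)) <= 0.
  apply: sumr_le0 => i _; have := aa_ge0 i; have := aa_le i; have := xx3.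
  have := xx_gt0; nra.
rewrite !big_split /= !sumrN -mulr_sumr.
have -> : \sum_(i<N) (xx - xx^+2) = N%:R * (xx - xx^+2).
  by rewrite sumr_const card_ord mulr_natl.
move: h4; rewrite /S2; lra.
Qed.

Lemma S_eq_row (u : 'rV[R]_N) rho j : u *m Smx = rho *: u ->
  \sum_i u 0 i * (adj i j)%:R / sq i = rho * u 0 j * sq j.
Proof.
move=> /(congr1 (fun m : 'rV[R]_N => m 0 j)); rewrite !mxE => H.
have sj : sq j != 0 by rewrite gt_eqF // sq_gt0.
rewrite -H mulr_suml; apply: eq_bigr => i _; rewrite mxE.
have si : sq i != 0 by rewrite gt_eqF // sq_gt0.
by field; rewrite si sj.
Qed.

Lemma row_nz (u : 'rV[R]_N) : u != 0 -> exists i, u 0 i != 0.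
Proof.
move=> un; case: (pickP (fun i => u 0 i != 0)) => [i Hi|H]; first by exists i.
by case/eqP: un; apply/rowP => i; rewrite mxE; apply/eqP; rewrite -[_ == _]negbK H.
Qed.

Lemma eig_bound rho : eigenvalue Smx rho -> `|rho| <= 1.
Proof.
move=> /eigenvalueP [u Hu un].
have [i0 Hi0] := row_nz un.
pose g i := u 0 i / sq i.
have Hg : forall j, \sum_i g i * (adj i j)%:R = rho * dg j * g j.
  move=> j; transitivity (\sum_i u 0 i * (adj i j)%:R / sq i).
    by apply: eq_bigr => i _; rewrite /g mulrAC.
  rewrite (S_eq_row _ Hu) /g -sq2.
  have sj : sq j != 0 by rewrite gt_eqF // sq_gt0.
  by field.
have [j _ Hj] := @arg_maxP _ _ _ i0 predT (fun i => `|g i|) isT.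
have gj : 0 < `|g j|.
  apply: lt_le_trans (Hj i0 isT); rewrite normr_gt0 /g mulf_neq0 //.
  by rewrite invr_eq0 gt_eqF // sq_gt0.
have : `|rho| * dg j * `|g j| <= dg j * `|g j|.
  have dj : 0 <= dg j by rewrite ltW ?dg_gt0.
  rewrite -[dg j]ger0_norm // -!normrM -Hg.
  apply: le_trans (ler_norm_sum _ _ _) _.
  rewrite normrM ger0_norm // /dg deg_sum mulr_suml; apply: ler_sum => i _.
  rewrite normrM [`|(adj i j)%:R|]ger0_norm // (adj_sym i j) mulrC; apply: ler_wpM2l => //.
  exact: Hj.
move=> H; have p : 0 < dg j * `|g j| by rewrite mulr_gt0 ?dg_gt0.
by rewrite -(ler_pM2r p) mul1r mulrA.
Qed.

Lemma eig_lap rho : eigenvalue Smx rho -> root (char_poly (normLap R adj)) (1 - rho).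
Proof.
move=> /eigenvalueP [u Hu un]; rewrite -eigenvalue_root_char.
apply/eigenvalueP; exists (\row_i (u 0 i * sq i)); last first.
  apply: contra un => /eqP w0; apply/eqP/rowP => i.
  have := congr1 (fun m : 'rV[R]_N => m 0 i) w0; rewrite !mxE => /eqP.
  rewrite mulf_eq0 => /orP[/eqP -> //|]; by rewrite gt_eqF // sq_gt0.
apply/rowP => j; rewrite !mxE.
under eq_bigr do rewrite !mxE mulrBr.
rewrite big_split /= sumrN (bigD1 j) //= eqxx mulr1 big1 ?addr0; last first.
  by move=> i /negbTE ->; rewrite mulr0.
have -> : \sum_i u 0 i * sq i * ((adj i j)%:R / (deg adj i)%:R) =
          \sum_i u 0 i * (adj i j)%:R / sq i.
  apply: eq_bigr => i _; rewrite -/(dg i) -sq2.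
  have si : sq i != 0 by rewrite gt_eqF // sq_gt0.
  by field.
rewrite (S_eq_row _ Hu); ring.
Qed.
End Comb.

Lemma diag_sq (F : comNzRingType) n (e : 'rV[F]_n) :
  diag_mx e *m diag_mx e = diag_mx (\row_i (e 0 i ^+ 2)).
Proof.
apply/matrixP => i j; rewrite mul_diag_mx !mxE.
by case: (i =P j) => [->|_]; rewrite ?mulr1n ?mulr0n ?mulr0 // expr2.
Qed.

Lemma conj_mul (F : fieldType) n (U X Y : 'M[F]_n) : U \in unitmx ->
  (invmx U *m X *m U) *m (invmx U *m Y *m U) = invmx U *m (X *m Y) *m U.
Proof.
move=> Uu; rewrite -!mulmxA; congr (_ *m _); congr (_ *m _).
by rewrite mulKVmx.
Qed.

Lemma tr_conj (F : fieldType) n (U X : 'M[F]_n) : U \in unitmx ->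
  \tr (invmx U *m X *m U) = \tr X.
Proof. by move=> Uu; rewrite mxtrace_mulC mulmxA mulmxV // mul1mx. Qed.

Lemma spectral_real (R : rcfType) n (A : 'M[R]_n) : A^T = A ->
  exists rho : 'I_n -> R, (forall k, eigenvalue A (rho k)) /\
    \tr (A *m A) = \sum_k rho k ^+ 2 /\
    \tr (A *m A *m (A *m A)) = \sum_k rho k ^+ 4.
Proof.
move=> Asym.
pose AC := map_mx (real_complex R) A.
have herm : AC \is hermsymmx.
  apply: realsym_hermsym.
    apply/is_hermitianmxP; rewrite expr0 scale1r; apply/matrixP => i j.
    rewrite !mxE /=; have := congr1 (fun M : 'M[R]_n => M j i) Asym.
    by rewrite mxE => ->.
  by apply/mxOverP => i j; rewrite mxE; apply/complex_realP; exists (A i j).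
have /orthomx_spectralP E := hermitian_normalmx herm.
have rl := hermitian_spectral_diag_real herm.
set U := spectralmx AC in E; set lam := spectral_diag AC in E rl.
have Uu : U \in unitmx by exact: spectral_unit.
pose rho k := complex.Re (lam 0 k).
have lamE : forall k, lam 0 k = (real_complex R) (rho k).
  move=> k; rewrite /rho; have /complex_realP [t ->] := mxOverP rl 0 k.
  by [].
exists rho; split.
  move=> k; rewrite eigenvalue_root_char -(fmorph_root (real_complex R)) map_char_poly.
  rewrite -eigenvalue_root_char -/AC; apply/eigenvalueP.
  exists (row k U).
    rewrite -row_mul {1}E !mulmxA mulmxV // mul1mx mul_diag_mx.
    by apply/rowP => j; rewrite !mxE lamE.
  apply/eqP => h.
  have := congr1 (fun M : 'M_n => (row k M) 0 k) (mulmxV Uu).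
  rewrite /= row_mul h mul0mx !mxE eqxx => /eqP; by rewrite eq_sym oner_eq0.
have trE : forall X : 'M[R]_n, (real_complex R) (\tr X) = \tr (map_mx (real_complex R) X).
  by move=> X; rewrite /mxtrace rmorph_sum; apply: eq_bigr => i _; rewrite mxE.
split; apply: (@complexI R).
  rewrite trE rmorph_sum !map_mxM -/AC E.
  rewrite conj_mul // tr_conj // diag_sq mxtrace_diag; apply: eq_bigr => k _.
  by rewrite mxE lamE rmorphXn.
rewrite trE rmorph_sum !map_mxM -/AC E.
rewrite !conj_mul // tr_conj // !diag_sq mxtrace_diag; apply: eq_bigr => k _.
by rewrite !mxE lamE -exprM rmorphXn.
Qed.

Theorem mainTheorem5 (R : rcfType) (N : nat) (adj : rel 'I_N) :
  simple_graph adj -> gconnected adj -> (3 <= N)%N -> (3 <= mindeg adj)%N ->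
  lapEps R adj <= Num.sqrt ((mindeg adj)%:R - 1) / (mindeg adj)%:R /\
  Num.sqrt ((mindeg adj)%:R - 1) / (mindeg adj)%:R < 1 / 2 :> R.
Proof.
move=> [_ asym] _ N3 d3.
have dle := mindeg_le adj.
set dm := mindeg adj in d3 dle *.
set x := xx R dm.
have x0 : 0 < x by apply: xx_gt0.
have x3 : 3%:R * x <= 1 by apply: xx3.
set s := Num.sqrt (dm%:R - 1) / dm%:R.
have dm0 : 0 < dm%:R :> R by apply: (dm_gt0 R d3).
have s0 : 0 <= s by rewrite divr_ge0 ?sqrtr_ge0 // ltW.
have s2 : s ^+ 2 = x - x ^+ 2.
  rewrite /s /x /xx expr_div_n sqr_sqrtr; last by rewrite subr_ge0 ler1n; apply: leq_trans d3.
  by field; rewrite gt_eqF.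
split; last first.
  rewrite -(@ltr_sqr _ s (1/2)) ?nnegrE //; last by lra.
  have : x <= 1/3 by rewrite ler_pdivlMr //; lra.
  move: s2; nra.
have Ssym : (Smx R adj)^T = Smx R adj.
  by apply/matrixP => i j; rewrite mxE; apply: S_sym.
have [rho [eig [t2 t4]]] := spectral_real Ssym.
have rho1 : forall k, rho k ^+ 2 <= 1.
  move=> k; have := eig_bound asym d3 dle (eig k).
  rewrite -real_normK ?num_real // => h; apply: exprn_ile1 => //.
have [k rk] : exists k, rho k ^+ 2 <= x - x ^+ 2.
  case: (pickP (fun k => rho k ^+ 2 <= x - x ^+ 2)) => [k hk|H]; first by exists k.
  exfalso.
  pose q k := (rho k ^+ 2 - (x - x ^+ 2)) * (1 - rho k ^+ 2).
  have hlt : forall k, x - x ^+ 2 < rho k ^+ 2.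
    by move=> k; have := H k => /= /negbT; rewrite -ltNge.
  have hq : forall k, 0 <= q k.
    move=> k; apply: mulr_ge0; first by rewrite subr_ge0 ltW.
    by rewrite subr_ge0.
  have hs : \sum_k q k <= 0.
    have ti := trace_ineq R asym d3 dle.
    rewrite /S2 t4 t2 in ti.
    have -> : \sum_k q k = - \sum_k rho k ^+ 4
        + (1 + (x - x ^+ 2)) * \sum_k rho k ^+ 2 - N%:R * (x - x ^+ 2).
      have -> : N%:R * (x - x ^+ 2) = \sum_(k < N) (x - x ^+ 2).
        by rewrite sumr_const card_ord mulr_natl.
      rewrite mulr_sumr -sumrN -big_split -sumrB /=; apply: eq_bigr => k _.
      rewrite /q; ring.
    exact: ti.
  have e : \sum_k q k == 0 by rewrite eq_le hs sumr_ge0.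
  have q0 := psumr_eq0P (fun k _ => hq k) (eqP e).
  have r1 : forall k, rho k ^+ 2 = 1.
    move=> k; have := q0 k isT; rewrite /q => /eqP; rewrite mulf_eq0.
    rewrite subr_eq0 gt_eqF ?hlt //= subr_eq0 => /eqP ->.
    by [].
  have : \sum_k aa R adj k <= N%:R * x.
    have -> : N%:R * x = \sum_(k < N) x by rewrite sumr_const card_ord mulr_natl.
    apply: ler_sum => k _; exact: aa_le.
  rewrite -(tr_S2 R asym) t2 (eq_bigr (fun _ => 1)) ?sumr_const ?card_ord; last by move=> k _; apply: r1.
  have : 0 < N%:R :> R by rewrite ltr0n; apply: leq_trans N3.
  have : x <= 1/3 by rewrite ler_pdivlMr //; lra.
  nra.
have hr := eig_lap d3 dle (eig k).
have pn : char_poly (normLap R adj) != 0.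
  by apply: monic_neq0; exact: char_poly_monic.
have hin : 1 - rho k \in lapEigenvalues R adj.
  by rewrite /lapEigenvalues -(roots_on_rootsR pn) hr andbT.
rewrite /lapEps; apply: (le_trans (ge_bigmin_seq _ _ xpredT (fun l => `|1 - l|) hin isT)).
have -> : 1 - (1 - rho k) = rho k by ring.
rewrite -(@ler_sqr _ `|rho k| s) ?nnegrE // real_normK ?num_real //.
move: s2 rk; lra.
Qed.
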